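(* Let $d$ be a positive integer and let $\omega_N\subset\mathbb{S}^{d-1}$ be a set of $N$ distinct points on the unit sphere of $\mathbb{R}^d$. Assume that for any three distinct points $x,y,z\in\omega_N$, $$\langle x,y\rangle\langle x,z\rangle\langle y,z\rangle\le 0.$$ Then $N\le 2d$. Moreover, $N=2d$ holds only if $\omega_N$ is nearly orthogonal.
   Context: $\langle\cdot,\cdot\rangle$ is the standard Euclidean inner product and $\mathbb{S}^{d-1}=\{x\in\mathbb{R}^d:\|x\|=1\}$. A set of nonzero vectors in $\mathbb{R}^d$ is called nearly orthogonal if, among any three distinct vectors of the set, at least two are orthogonal. *)

(* Defs.v *)
From HB Require Import structures.
From mathcomp Require Import all_boot all_order all_algebra.
From mathcomp Require Import reals.
Set Implicit Arguments. Unset Strict Implicit. Unset Printing Implicit Defensive.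
Import Order.TTheory GRing.Theory Num.Theory.
Local Open Scope ring_scope.

Definition dot (R : realType) (d : nat) (u v : 'rV[R]_d) : R :=
  \sum_(i < d) u 0 i * v 0 i.

Definition nearly_orthogonal (R : realType) (d : nat) (S : 'rV[R]_d -> Prop) : Prop :=
  (forall v, S v -> v != 0) /\
  (forall u v w, S u -> S v -> S w -> u != v -> u != w -> v != w ->
     dot u v = 0 \/ dot u w = 0 \/ dot v w = 0).

(* Main.v *)
Require Import Defs.
From mathcomp Require Import all_boot all_order all_algebra.
From mathcomp Require Import reals.
From mathcomp Require Import ring lra.
Import Order.TTheory GRing.Theory Num.Theory.
Local Open Scope ring_scope.

Section H.
Context {R : realType}.

Lemma tr_sq_ge0 m n (Z : 'M[R]_(m,n)) : 0 <= \tr (Z *m Z^T).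
Proof.
rewrite /mxtrace; apply: sumr_ge0 => i _; rewrite mxE; apply: sumr_ge0 => j _.
rewrite mxE; rewrite -expr2; exact: sqr_ge0.
Qed.

Lemma cube_exp k (P : 'M[R]_k) : \tr((P - 1%:M) *m (P - 1%:M) *m (P - 1%:M))
  = \tr(P *m P *m P) - 3 * \tr(P *m P) + 3 * \tr P - k%:R.
Proof.
rewrite ?(mulmxBl, mulmxBr, mulmx1, mul1mx) ?raddfB /= ?mxtrace1.
ring.
Qed.

Lemma sq_exp m k (X : 'M[R]_(m,k)) (M := X^T *m X - 1%:M - 1%:M) :
  \tr((X *m M) *m (X *m M)^T) + \tr(M *m M^T)
  = \tr((X^T *m X) *m (X^T *m X) *m (X^T *m X)) - 3 * \tr((X^T *m X) *m (X^T *m X)) + 4 * k%:R.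
Proof.
have MT : M^T = M by rewrite /M !linearB /= trmx_mul trmxK trmx1.
rewrite MT trmx_mul MT -!mulmxA mxtrace_mulC !mulmxA.
rewrite -(mulmxA _ X^T X).
rewrite /M.
set H := X^T *m X.
rewrite ?(mulmxBl, mulmxBr, mulmx1, mul1mx) !mulmxA ?raddfB /= ?mxtrace1.
ring.
Qed.

Lemma trG2 m k (X : 'M[R]_(m,k)) : \tr((X *m X^T) *m (X *m X^T)) = \tr((X^T *m X) *m (X^T *m X)).
Proof. by rewrite -!mulmxA mxtrace_mulC !mulmxA. Qed.

Lemma trG3 m k (X : 'M[R]_(m,k)) : \tr((X *m X^T) *m (X *m X^T) *m (X *m X^T))
  = \tr((X^T *m X) *m (X^T *m X) *m (X^T *m X)).
Proof. by rewrite -!mulmxA mxtrace_mulC !mulmxA. Qed.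

Lemma nsum_le0 (I : finType) (F : I -> R) : (forall i, F i <= 0) -> \sum_i F i <= 0.
Proof. move=> h; rewrite -oppr_ge0 -sumrN; apply: sumr_ge0 => i _; rewrite oppr_ge0; exact: h. Qed.

Lemma nsum0 (I : finType) (F : I -> R) : (forall i, F i <= 0) -> \sum_i F i = 0 -> forall i, F i = 0.
Proof.
move=> h s i; apply/eqP; rewrite -oppr_eq0; apply/eqP.
apply: (@psumr_eq0P _ _ predT (fun i => - F i)) => //.
  by move=> j _; rewrite oppr_ge0.
by rewrite sumrN s oppr0.
Qed.

Lemma dotC d (u v : 'rV[R]_d) : dot u v = dot v u.
Proof. by rewrite /dot; apply: eq_bigr => i _; rewrite mulrC. Qed.
End H.
Arguments nsum0 {R I F}.
Arguments nsum_le0 {R I F}.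

Theorem theorem3p1 (R : realType) (d N : nat) (x : 'I_N -> 'rV[R]_d) :
  (0 < d)%N ->
  injective x ->
  (forall i, dot (x i) (x i) = 1) ->
  (forall i j k, i != j -> i != k -> j != k ->
     dot (x i) (x j) * dot (x i) (x k) * dot (x j) (x k) <= 0) ->
  (N <= 2 * d)%N /\
  (N = (2 * d)%N -> nearly_orthogonal (fun v => exists i, v = x i)).
Proof.
move=> d0 xinj x1 hx.
pose X : 'M[R]_(N,d) := \matrix_(i, j) x i 0 j.
have Gij i j : (X *m X^T) i j = dot (x i) (x j).
  by rewrite !mxE; apply: eq_bigr => k _; rewrite !mxE.
pose A := X *m X^T - 1%:M.
have Aij i j : A i j = dot (x i) (x j) - (i == j)%:R.
  by rewrite /A mxE Gij !mxE.
pose T i k j := A i j * A j k * A k i.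
have trA : \tr (A *m A *m A) = \sum_i \sum_k \sum_j T i k j.
  rewrite /mxtrace; apply: eq_bigr => i _; rewrite mxE; apply: eq_bigr => k _.
  by rewrite mxE mulr_suml.
have Tle i k j : T i k j <= 0.
  rewrite /T !Aij.
  have [->|ij] := eqVneq i j; first by rewrite x1 /= mulr1n subrr !mul0r.
  have [->|jk] := eqVneq j k; first by rewrite x1 /= mulr1n subrr mulr0 mul0r.
  have [->|ki] := eqVneq k i; first by rewrite x1 /= mulr1n subrr mulr0.
  rewrite /= !mulr0n !subr0.
  have := hx i j k ij ltac:(by rewrite eq_sym) jk.
  by rewrite [dot (x k) (x i)]dotC mulrAC.
have h1 : \tr (A *m A *m A) <= 0.
  by rewrite trA; apply: nsum_le0 => i; apply: nsum_le0 => k; apply: nsum_le0.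
have trG : \tr (X *m X^T) = N%:R.
  rewrite /mxtrace (eq_bigr (fun _ => 1)); first by rewrite sumr_const card_ord.
  by move=> i _; rewrite Gij x1.
have h2 : \tr (A *m A *m A) = 
   (\tr((X *m (X^T *m X - 1%:M - 1%:M)) *m (X *m (X^T *m X - 1%:M - 1%:M))^T)
    + \tr((X^T *m X - 1%:M - 1%:M) *m (X^T *m X - 1%:M - 1%:M)^T)) + 2 * N%:R - 4 * d%:R.
  rewrite sq_exp /A cube_exp trG2 trG3 trG; ring.
have S0 := @tr_sq_ge0 _ _ _ (X *m (X^T *m X - 1%:M - 1%:M)).
have S1 := @tr_sq_ge0 _ _ _ (X^T *m X - 1%:M - 1%:M).
split.
  have : N%:R <= 2 * d%:R :> R by lra.
  by rewrite -natrM ler_nat.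
move=> N2.
have h3 : \tr (A *m A *m A) = 0.
  apply/eqP; rewrite eq_le h1 /=.
  have : N%:R = 2 * d%:R :> R by rewrite N2 natrM.
  lra.
split.
  move=> v [i ->]; apply/eqP => e.
  have := x1 i; rewrite e /dot big1 => [/eqP|k _]; last by rewrite mxE mul0r.
  by rewrite eq_sym oner_eq0.
move=> u v w [i ->] [j ->] [k ->] uv uw vw.
have ij : i != j by apply: contraNneq uv => ->.
have ik : i != k by apply: contraNneq uw => ->.
have jk : j != k by apply: contraNneq vw => ->.
rewrite trA in h3.
have e1 := nsum0 (fun i => nsum_le0 (fun k => nsum_le0 (Tle i k))) h3 i.
have e2 := nsum0 (fun k => nsum_le0 (Tle i k)) e1 k.
have e3 := nsum0 (Tle i k) e2 j.
move: e3; rewrite /T !Aij (negbTE ij) (negbTE jk) eq_sym (negbTE ik) !subr0.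
move=> /eqP; rewrite !mulf_eq0 => /orP [/orP [] | ] /eqP.
- by left.
- by rewrite dotC; right; right.
- by rewrite dotC; right; left.
Qed.
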